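(* Let $0<p\le 1$ and let $\mathcal{X}=(\mathbf{x}_n)_{n=1}^\infty$ be a spreading basis of a locally $p$-convex quasi-Banach space $\mathbb{X}$. Then there is an equivalent $p$-norm for $\mathbb{X}$ relative to which $\mathcal{X}$ is isometrically spreading.
   Context: Scalars are real or complex. A quasi-Banach space is locally $p$-convex if the origin has a $p$-convex neighbourhood; equivalently it admits an equivalent $p$-norm, i.e. a quasi-norm $\|\cdot\|$ with $\|f+g\|^p\le\|f\|^p+\|g\|^p$. A complete minimal system is a sequence $\mathcal{X}=(\mathbf{x}_n)$ with dense linear span for which there exist $\mathbf{x}_n^*\in\mathbb{X}^*$ with $\mathbf{x}_n^*(\mathbf{x}_k)=\delta_{n,k}$ (coordinate functionals). For $\mathcal{N}\subseteq\mathbb{N}$ and an injective map $\psi\colon\mathcal{N}\to\mathbb{N}$, $\psi$ is a shift relative to $\mathcal{X}$ if the linear map $f\mapsto\sum_{n\in\mathcal{N}}\mathbf{x}_n^*(f)\,\mathbf{x}_{\psi(n)}$, $f\in\operatorname{span}(\mathcal{X})$, extends to a bounded operator $L_\psi\colon\mathbb{X}\to\mathbb{X}$. A spreading basis is a complete minimal system such that every increasing map $\psi\colon\mathbb{N}\to\mathbb{N}$ is a shift and $L_\psi$ is an isomorphism (onto its range). For a sequence $(\mathbf{x}_n)$, $\mathcal{N}\subseteq\mathbb{N}$ and an injective $\psi\colon\mathcal{N}\to\mathbb{N}$, $\psi$ is a translation if the assignment $\mathbf{x}_n\mapsto\mathbf{x}_{\psi(n)}$, $n\in\mathcal{N}$,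 defines a linear map on $\operatorname{span}(\mathbf{x}_n\colon n\in\mathcal{N})$ extending to an isomorphism $T_\psi$ from the closed linear span of $\{\mathbf{x}_n\colon n\in\mathcal{N}\}$ onto the closed linear span of $\{\mathbf{x}_n\colon n\in\psi(\mathcal{N})\}$. A sequence is isometrically spreading if every increasing map $\psi\colon\mathcal{N}\to\mathbb{N}$ with $\mathcal{N}\subseteq\mathbb{N}$ infinite is a translation with $\|T_\psi\|\le 1$. *)

(* Defs.v *)
From HB Require Import structures.
From mathcomp Require Import all_boot all_order all_algebra.
From mathcomp Require Import all_classical all_reals all_analysis.
From mathcomp Require Import complex.
Set Implicit Arguments. Unset Strict Implicit. Unset Printing Implicit Defensive.
Import Order.TTheory GRing.Theory Num.Theory.
Local Open Scope ring_scope.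
Local Open Scope classical_set_scope.

(* Scalars: a field K (instantiated with R or R[i]) with an absolute value
   absK : K -> R; the space X is a K-vector space; (quasi-)norms are R-valued. *)
Section QuasiBanach.
Variables (R : realType) (K : numFieldType) (absK : K -> R) (X : lmodType K).
Implicit Types (N : X -> R) (x : nat -> X).

Definition quasinorm N : Prop :=
  [/\ forall f, 0 <= N f,
      forall f, N f = 0 -> f = 0,
      forall (a : K) f, N (a *: f) = absK a * N f &
      exists2 kappa : R, 1 <= kappa &
        forall f g, N (f + g) <= kappa * (N f + N g)].

Definition complete_wrt N : Prop :=
  forall u : nat -> X,
    (forall e : R, 0 < e -> exists n0, forall m n,
        (n0 <= m)%N -> (n0 <= n)%N -> N (u m - u n) < e) ->
    exists l : X, forall e : R, 0 < e -> exists n0, forall n,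
        (n0 <= n)%N -> N (u n - l) < e.

Definition quasi_banach N : Prop := quasinorm N /\ complete_wrt N.

Definition equiv_qn N N' : Prop :=
  exists c C : R, [/\ 0 < c, 0 < C & forall f, c * N f <= N' f <= C * N f].

Definition pnorm (p : R) N : Prop :=
  quasinorm N /\ forall f g, N (f + g) `^ p <= N f `^ p + N g `^ p.

Definition locally_pconvex (p : R) N : Prop :=
  exists N', pnorm p N' /\ equiv_qn N N'.

Definition lin_comb x (s : seq nat) (a : nat -> K) : X :=
  \sum_(n <- s) a n *: x n.

Definition in_span x (S : set nat) (f : X) : Prop :=
  exists (s : seq nat) (a : nat -> K),
    (forall n, n \in s -> S n) /\ f = lin_comb x s a.

Definition in_closed_span N x (S : set nat) (f : X) : Prop :=
  forall e : R, 0 < e -> exists g, in_span x S g /\ N (f - g) < e.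

Definition linear_map (L : X -> X) : Prop :=
  forall (a : K) f g, L (a *: f + g) = a *: L f + L g.

Definition bounded_operator N (L : X -> X) : Prop :=
  linear_map L /\ exists C : R, forall f, N (L f) <= C * N f.

Definition complete_minimal_system N x (xs : nat -> X -> K) : Prop :=
  [/\ forall f, in_closed_span N x setT f,
      forall n, (forall (a : K) f g, xs n (a *: f + g) = a * xs n f + xs n g)
                /\ (exists C : R, forall f, absK (xs n f) <= C * N f) &
      forall n k, xs n (x k) = (n == k)%:R].

Definition is_shift_op N x (xs : nat -> X -> K) (psi : nat -> nat)
    (L : X -> X) : Prop :=
  bounded_operator N L /\
  forall (s : seq nat) (a : nat -> K), uniq s ->
    L (lin_comb x s a) = \sum_(n <- s) xs n (lin_comb x s a) *: x (psi n).

Definition spreading_basis N x : Prop :=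
  exists xs : nat -> X -> K, complete_minimal_system N x xs /\
    forall psi : nat -> nat, (forall m n, (m < n)%N -> (psi m < psi n)%N) ->
      exists L : X -> X, is_shift_op N x xs psi L /\
        exists2 c : R, 0 < c & forall f, c * N f <= N (L f).

Definition translation_norm_le1 N x (M : set nat) (psi : nat -> nat) : Prop :=
  exists T : X -> X,
    [/\ forall (a : K) f g, in_closed_span N x M f -> in_closed_span N x M g ->
          T (a *: f + g) = a *: T f + T g,
        forall (s : seq nat) (a : nat -> K), (forall n, n \in s -> M n) ->
          T (lin_comb x s a) = lin_comb (x \o psi) s a,
        (forall f, in_closed_span N x M f -> in_closed_span N x (psi @` M) (T f)) /\
        (forall g, in_closed_span N x (psi @` M) g ->
          exists2 f, in_closed_span N x M f & T f = g),
        (exists2 c : R, 0 < c & forall f, in_closed_span N x M f -> c * N f <= N (T f)) &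
        forall f, in_closed_span N x M f -> N (T f) <= N f].

Definition isometrically_spreading N x : Prop :=
  forall (M : set nat) (psi : nat -> nat), infinite_set M ->
    (forall m n, M m -> M n -> (m < n)%N -> (psi m < psi n)%N) ->
    translation_norm_le1 N x M psi.

End QuasiBanach.

(* Main.v *)
Require Import Defs.
From HB Require Import structures.
From mathcomp Require Import all_boot all_order all_algebra.
From mathcomp Require Import all_classical all_reals all_analysis.
From mathcomp Require Import complex.
From mathcomp Require Import ring lra.
Set Implicit Arguments. Unset Strict Implicit. Unset Printing Implicit Defensive.
Import Order.TTheory GRing.Theory Num.Theory.
Local Open Scope ring_scope.

Definition Inc (psi : nat -> nat) := forall m n, (m < n)%N -> (psi m < psi n)%N.

Lemma Inc_le psi : Inc psi -> forall m n, (m <= n)%N -> (psi m <= psi n)%N.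
Proof.
move=> H m n; rewrite leq_eqVlt => /orP[/eqP->//|/H/ltnW//].
Qed.

Lemma Inc_ltE psi : Inc psi -> forall m n, (psi m < psi n)%N = (m < n)%N.
Proof.
move=> H m n; apply/idP/idP; last exact: H.
apply: contraTT; rewrite -!leqNgt => /(Inc_le H)//.
Qed.

Lemma Inc_ge psi : Inc psi -> forall n, (n <= psi n)%N.
Proof.
move=> H; elim=> [//|n IH]; exact: leq_ltn_trans IH (H _ _ (ltnSn n)).
Qed.

Lemma Inc_id : Inc id. Proof. by []. Qed.

Lemma Inc_comp f g : Inc f -> Inc g -> Inc (f \o g).
Proof. by move=> Hf Hg m n /Hg /Hf. Qed.

Section Basics.
Variables (R : realType) (K : numFieldType) (X : lmodType K).

Definition lc (y : nat -> X) (t : seq (nat * K)) : X :=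
  \sum_(u <- t) u.2 *: y u.1.

Definition mapi (g : nat -> nat) (t : seq (nat * K)) :=
  map (fun u => (g u.1, u.2)) t.

Lemma lc_map y g t : lc (y \o g) t = lc y (mapi g t).
Proof. by rewrite /lc /mapi big_map. Qed.

Lemma lin_comb_lc y s a : lin_comb y s a = lc y (map (fun n => (n, a n)) s).
Proof. by rewrite /lin_comb /lc big_map. Qed.

Lemma lc_local y y' t : (forall u, u \in t -> y u.1 = y' u.1) -> lc y t = lc y' t.
Proof. by move=> H; rewrite /lc; apply: eq_big_seq => u /H ->. Qed.

Lemma lc_nil y : lc y [::] = 0. Proof. by rewrite /lc big_nil. Qed.
Lemma lc_cons y u t : lc y (u :: t) = u.2 *: y u.1 + lc y t.
Proof. by rewrite /lc big_cons. Qed.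

Definition lin (A : X -> X) := forall (a : K) f g, A (a *: f + g) = a *: A f + A g.

Lemma lin0 A : lin A -> A 0 = 0.
Proof.
move=> H; have h := H 1 0 0; rewrite !scale1r addr0 in h.
by apply: (addrI (A 0)); rewrite addr0 -h.
Qed.

Lemma linD A : lin A -> forall f g, A (f + g) = A f + A g.
Proof. by move=> H f g; have := H 1 f g; rewrite !scale1r. Qed.

Lemma linZ A : lin A -> forall a f, A (a *: f) = a *: A f.
Proof. by move=> H a f; rewrite -(addr0 (a *: f)) H lin0 // addr0. Qed.

Lemma linN A : lin A -> forall f, A (- f) = - A f.
Proof. by move=> H f; rewrite -scaleN1r linZ // scaleN1r. Qed.

Lemma linB A : lin A -> forall f g, A (f - g) = A f - A g.
Proof. by move=> H f g; rewrite linD // linN. Qed.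

Lemma lin_lc A y t : lin A -> A (lc y t) = lc (A \o y) t.
Proof.
move=> H; elim: t => [|u t IH]; first by rewrite !lc_nil lin0.
by rewrite !lc_cons H IH.
Qed.

Lemma lcD y t1 t2 : lc y (t1 ++ t2) = lc y t1 + lc y t2.
Proof. by rewrite /lc big_cat. Qed.

Lemma lcZ y a t : a *: lc y t = lc y (map (fun u => (u.1, a * u.2)) t).
Proof.
elim: t => [|u t IH]; first by rewrite !lc_nil scaler0.
by rewrite /= !lc_cons scalerDr IH scalerA.
Qed.

Lemma lcN y t : - lc y t = lc y (map (fun u => (u.1, - u.2)) t).
Proof.
rewrite -scaleN1r lcZ; congr lc; apply: eq_map => u; by rewrite mulN1r.
Qed.


Lemma lc_span (y : nat -> X) t : exists s a, [/\ uniq s,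
  (forall n, n \in s -> n \in map fst t) & lc y t = lin_comb y s a].
Proof.
elim: t => [|u t [s [a [us hs e]]]].
  by exists [::], (fun _ => 0); split => //; rewrite lc_nil /lin_comb big_nil.
case hu: (u.1 \in s).
  exists s, (fun n => a n + (if n == u.1 then u.2 else 0)); split => //.
    by move=> n /hs; rewrite inE => ->; rewrite orbT.
  rewrite lc_cons e /lin_comb.
  rewrite (_ : \sum_(n <- s) (a n + (if n == u.1 then u.2 else 0)) *: y n =
    \sum_(n <- s) a n *: y n + \sum_(n <- s) (if n == u.1 then u.2 else 0) *: y n);
    last by rewrite -big_split; apply: eq_bigr => n _; rewrite scalerDl.
  rewrite addrC; congr (_ + _).
  rewrite (bigD1_seq u.1) //= eqxx big1 ?addr0 //.
  by move=> n /negbTE ->; rewrite scale0r.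
exists (u.1 :: s), (fun n => if n == u.1 then u.2 else a n); split.
- by rewrite /= hu.
- by move=> n; rewrite !inE => /orP[->//|/hs ->]; rewrite orbT.
- rewrite lc_cons e /lin_comb big_cons eqxx; congr (_ + _).
  apply: eq_big_seq => n ns; case: eqP => // en.
  by rewrite -en ns in hu.
Qed.
End Basics.

Local Close Scope ring_scope.

Section Diag.
Variables (T : Type) (t0 : T) (idx : T -> seq nat).
Variable B : (nat -> nat) -> T -> nat -> Prop.
Hypothesis Bloc : forall psi psi' t j, (forall n, n \in idx t -> psi n = psi' n) ->
  B psi t j -> B psi' t j.
Hypothesis Bgood : forall psi, Inc psi -> exists j0, forall t, ~ B psi t j0.

Lemma diag : exists r u j, Inc u /\ forall psi, Inc psi ->
  (forall n, (n < r)%N -> psi n = u n) -> forall t, ~ B psi t j.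
Proof.
apply: contrapT => Hn.
have H1 : forall rj : nat * (nat -> nat) * nat, exists w : (nat -> nat) * T,
    Inc rj.1.2 -> [/\ Inc w.1, (forall n, (n < rj.1.1)%N -> w.1 n = rj.1.2 n)
                   & B w.1 w.2 rj.2].
  move=> [[r u] j] /=.
  case: (pselect (Inc u)) => Iu; last by exists (u, t0).
  apply: contrapT => Hc; apply: Hn; exists r, u, j; split => // psi Ipsi Ag t Bt.
  by apply: Hc; exists (psi, t) => _; split.
have [F HF] := choice H1.
pose bnd (s : seq nat) := \max_(n <- s) n.
pose st := fix st j := if j is j'.+1 then
   let s := st j' in let w := F (s.1, s.2, j') in
   ((maxn s.1 (bnd (idx w.2))).+1, w.1) else (0%N, id).
pose w j := F ((st j).1, (st j).2, j).
have stS j : st j.+1 = ((maxn (st j).1 (bnd (idx (w j).2))).+1, (w j).1) by [].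
have inv j : Inc (st j).2 /\ (j <= (st j).1)%N.
  elim: j => [|j [Ij rj]]; first by split => //; exact: Inc_id.
  have [I1 _ _] := HF ((st j).1, (st j).2, j) Ij.
  rewrite stS /=; split => //.
  by rewrite ltnS (leq_trans rj) // leq_maxl.
have step j : [/\ Inc (st j.+1).2, (forall n, (n < (st j).1)%N -> (st j.+1).2 n = (st j).2 n)
               & B (st j.+1).2 (w j).2 j].
  have [I1 A1 B1] := HF ((st j).1, (st j).2, j) (proj1 (inv j)).
  by rewrite stS /=; split.
have rmono j : ((st j).1 <= (st j.+1).1)%N.
  by rewrite stS /= ltnW // ltnS leq_maxl.
have rmono' j d : ((st j).1 <= (st (j + d)).1)%N.
  elim: d => [|d IHd]; first by rewrite addn0.
  by apply: (leq_trans IHd); rewrite addnS; apply: rmono.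
have fwd j d : forall n, (n < (st j).1)%N -> (st (j + d)).2 n = (st j).2 n.
  elim: d => [|d IH] n hn; first by rewrite addn0.
  have [_ A1 _] := step (j + d).
  rewrite addnS A1 ?IH //.
  exact: leq_trans hn (rmono' j d).
have fwd' j k n : (j <= k)%N -> (n < (st j).1)%N -> (st k).2 n = (st j).2 n.
  by move=> /subnKC <-; apply: fwd.
pose psi n := (st n.+1).2 n.
have lim j n : (n < (st j).1)%N -> psi n = (st j).2 n.
  move=> hn; rewrite /psi.
  rewrite -(fwd' n.+1 (maxn j n.+1) n (leq_maxr _ _)); last first.
    exact: (leq_trans (ltnSn n) (proj2 (inv n.+1))).
  by rewrite (fwd' j (maxn j n.+1) n (leq_maxl _ _)).
have Ipsi : Inc psi.
  move=> m n hmn; rewrite (lim n.+1 m); last first.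
    exact: (ltn_trans hmn (leq_trans (ltnSn n) (proj2 (inv n.+1)))).
  exact: (proj1 (inv n.+1)).
have Bpsi j : B psi (w j).2 j.
  have [_ _ B1] := step j.
  apply: (Bloc _ B1) => n hn; rewrite (lim j.+1) // stS /= ltnS.
  apply: (leq_trans _ (leq_maxr _ _)).
  rewrite /bnd; exact: (@leq_bigmax_seq _ _ xpredT (fun n => n) _ hn isT).
have [j0 Hj0] := Bgood Ipsi.
exact: Hj0 _ (Bpsi j0).
Qed.

End Diag.

Definition cnt (s : nat -> nat) m := count (fun k => (s k < m)%N) (iota 0 m).

Lemma count_lt_iota n m : (n <= m)%N -> count (fun k => (k < n)%N) (iota 0 m) = n.
Proof.
move=> /subnKC <-; rewrite iotaD count_cat add0n.
rewrite (@eq_in_count _ _ predT); last by move=> k; rewrite mem_iota add0n => /andP[].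
rewrite count_predT size_iota.
rewrite (@eq_in_count _ _ pred0) ?count_pred0 ?addn0 //.
by move=> k; rewrite mem_iota => /andP[h _]; rewrite /= ltnNge h.
Qed.

Lemma cnt_Inc s n : Inc s -> cnt s (s n) = n.
Proof.
move=> Is; rewrite /cnt (@eq_count _ _ (fun k => (k < n)%N)).
  exact/count_lt_iota/Inc_ge.
by move=> k; rewrite Inc_ltE.
Qed.

Lemma cnt_mono s m m' : (m <= m')%N -> (cnt s m <= cnt s m')%N.
Proof.
move=> /subnKC <-; rewrite /cnt iotaD count_cat.
apply: (leq_trans _ (leq_addr _ _)); apply: sub_count => k /=.
by move=> h; apply: (leq_trans h); apply: leq_addr.
Qed.

Lemma refine s t : Inc s -> Inc t -> exists a b, [/\ Inc a, Inc b &
  forall n, a (s n) = b (t n)].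
Proof.
move=> Is It.
exists (fun m => m + t (cnt s m))%N, (fun m => m + s (cnt t m))%N; split.
- move=> m n hmn; rewrite -addSn leq_add //; apply: Inc_le => //.
  exact/cnt_mono/ltnW.
- move=> m n hmn; rewrite -addSn leq_add //; apply: Inc_le => //.
  exact/cnt_mono/ltnW.
- by move=> n; rewrite !cnt_Inc // addnC.
Qed.

Lemma Inc_step (f : nat -> nat) : (forall n, (f n < f n.+1)%N) -> Inc f.
Proof.
move=> H m n /subnKC <-; elim: (n - m.+1)%N => [|d IH]; first by rewrite addn0.
by rewrite addnS; exact: ltn_trans IH (H _).
Qed.

Local Open Scope classical_set_scope.

Lemma enum_inf (M : set nat) : infinite_set M ->
  exists s, [/\ Inc s, forall n, M (s n) & forall m, M m -> exists n, s n = m].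
Proof.
move=> Minf.
have unb : forall k, exists m, `[< M m >] && (k <= m)%N.
  move=> k; apply: contrapT => Hn; apply: Minf.
  apply: (@sub_finite_set _ _ `I_k); last exact: finite_II.
  move=> m Mm /=; rewrite ltnNge; apply/negP => km; apply: Hn; exists m.
  by rewrite km andbT; apply/asboolP.
pose next k := ex_minn (unb k).
have nextP k : [/\ M (next k), (k <= next k)%N &
    forall m, M m -> (k <= m)%N -> (next k <= m)%N].
  rewrite /next; case: ex_minnP => m /andP[/asboolP Mm km] minm; split => //.
  by move=> m' Mm' km'; apply: minm; rewrite km' andbT; apply/asboolP.
pose s := fix s n := if n is n'.+1 then next (s n').+1 else next 0%N.
have sS n : s n.+1 = next (s n).+1 by [].
have Is : Inc s.
  by apply: Inc_step => n; rewrite sS; have [_ h _] := nextP (s n).+1.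
exists s; split => //.
  by case=> [|n]; [case: (nextP 0%N) | rewrite sS; case: (nextP (s n).+1)].
move=> m Mm.
have ex : forall N, (s 0 <= m)%N -> ~~ (s N <= m)%N ->
    exists n, (s n <= m)%N /\ ~~ (s n.+1 <= m)%N.
  elim=> [|N IH] h0 hN; first by rewrite h0 in hN.
  case hm: (s N <= m)%N; first by exists N; rewrite hm.
  by apply: IH => //; rewrite hm.
have [n [h1 h2]] : exists n, (s n <= m)%N /\ ~~ (s n.+1 <= m)%N.
  apply: (ex m.+1).
    by have [_ _ h] := nextP 0%N; apply: h.
  by rewrite -ltnNge; apply: leq_trans (Inc_ge Is _); exact: ltnSn.
exists n; apply/eqP; rewrite eqn_leq h1 /=.
rewrite leqNgt; apply/negP => hlt; move: h2; rewrite sS.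
by have [_ _ h] := nextP (s n).+1; rewrite h.
Qed.

Local Open Scope ring_scope.
Local Open Scope classical_set_scope.

Section Reals.
Variable R : realType.

Lemma small_inv (e : R) : 0 < e ->
  exists n0 : nat, forall n, (n0 <= n)%N -> n.+1%:R^-1 < e.
Proof.
move=> e0; exists (Num.bound (e^-1)) => n hn.
have ei0 : 0 < e^-1 by rewrite invr_gt0.
have h := archi_boundP (ltW ei0).
rewrite -(invrK e) ltf_pV2 ?posrE ?invr_gt0 ?ltr0n //.
apply: (lt_le_trans h); rewrite ler_nat; exact: leq_trans hn (leqnSn _).
Qed.

Lemma le_by_eps (a b : R) : (forall e, 0 < e -> a <= b + e) -> a <= b.
Proof. by move/ler_addgt0Pr. Qed.

Lemma ge0_le0_eq0 (a : R) : 0 <= a -> (forall e, 0 < e -> a <= e) -> a = 0.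
Proof.
move=> a0 H; apply/eqP; rewrite eq_le a0 andbT; apply: le_by_eps => e /H.
by rewrite add0r.
Qed.

Lemma mul_le_of_lt_div (a b c : R) : 0 < c -> a < b / c -> c * a <= b.
Proof. by move=> c0; rewrite ltr_pdivlMr // mulrC => /ltW. Qed.

End Reals.

Definition splice (r : nat) (u psi : nat -> nat) n :=
  if (n < r)%N then u n else (u r + psi (n - r))%N.

Lemma splice_Inc r u psi : Inc u -> Inc psi -> Inc (splice r u psi).
Proof.
move=> Iu Ip m n hmn; rewrite /splice.
case: (ltnP n r) => hn.
  by rewrite (ltn_trans hmn hn); apply: Iu.
case: (ltnP m r) => hm.
  by apply: (leq_trans (Iu _ _ hm)); apply: leq_addr.
rewrite ltn_add2l; apply: Ip; rewrite ltn_sub2r //.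
exact: leq_ltn_trans hm hmn.
Qed.

Lemma splice_agree r u psi n : (n < r)%N -> splice r u psi n = u n.
Proof. by rewrite /splice => ->. Qed.

Lemma splice_shift r u psi n : splice r u psi (n + r) = (psi n + u r)%N.
Proof. by rewrite /splice ltnNge leq_addl /= addnK addnC. Qed.

Lemma Inc_addr r : Inc (fun n => (n + r)%N).
Proof. by move=> m n; rewrite ltn_add2r. Qed.

Section QCore.
Variables (R : realType) (K : numFieldType) (X : lmodType K).
Variable q : X -> R.
Hypothesis q_ge0 : forall f, 0 <= q f.
Hypothesis q_eq0 : forall f, q f = 0 -> f = 0.
Hypothesis q0 : q 0 = 0.
Hypothesis qN : forall f, q (- f) = q f.
Hypothesis qD : forall f g, q (f + g) <= q f + q g.
Variable x : nat -> X.
Hypothesis dens : forall f (e : R), 0 < e -> exists t, q (f - lc x t) < e.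
Hypothesis compl : forall u : nat -> X,
  (forall e : R, 0 < e -> exists n0, forall m n, (n0 <= m)%N -> (n0 <= n)%N -> q (u m - u n) < e) ->
  exists l, forall e : R, 0 < e -> exists n0, forall n, (n0 <= n)%N -> q (u n - l) < e.

Lemma qB f g : q (f - g) = q (g - f).
Proof. by rewrite -qN opprB. Qed.

Lemma q_tri f g h : q (f - h) <= q (f - g) + q (g - h).
Proof. by have := qD (f - g) (g - h); rewrite addrA subrK. Qed.

Lemma q_tri3 f g h k : q (f - k) <= q (f - g) + q (g - h) + q (h - k).
Proof.
apply: (le_trans (q_tri f g k)); rewrite -addrA lerD2l; exact: q_tri.
Qed.

Definition qbnd (A : X -> X) := exists2 C : R, 0 < C & forall f, q (A f) <= C * q f.

Lemma agree (A B : X -> X) : lin A -> lin B -> qbnd A -> qbnd B ->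
  (forall t, A (lc x t) = B (lc x t)) -> forall f, A f = B f.
Proof.
move=> lA lB [C1 C10 H1] [C2 C20 H2] Ht f.
apply/eqP; rewrite -subr_eq0; apply/eqP/q_eq0.
apply: ge0_le0_eq0 => // e e0.
have C0 : 0 < C1 + C2 by lra.
have [t ht] := dens f (divr_gt0 e0 C0).
set g := lc x t.
apply: (le_trans (q_tri3 _ (A g) (B g) _)).
have -> : A g - B g = 0 by rewrite Ht subrr.
rewrite q0 addr0 -(linB lA) -(linB lB).
apply: (le_trans (lerD (H1 _) (H2 _))); rewrite (qB g f) -mulrDl.
exact: mul_le_of_lt_div C0 ht.
Qed.

Lemma ext_ub (A : X -> X) C : lin A -> qbnd A -> 0 <= C ->
  (forall t, q (A (lc x t)) <= C * q (lc x t)) -> forall f, q (A f) <= C * q f.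
Proof.
move=> lA [C1 C10 H1] C0 Ht f; apply: le_by_eps => e e0.
have D0 : 0 < C1 + C + 1 by lra.
have [t ht] := dens f (divr_gt0 e0 D0).
set g := lc x t.
have eA : A f = A g + A (f - g) by rewrite (linB lA) addrC subrK.
have hg : q g <= q f + q (f - g).
  by rewrite -(qN (f - g)) opprB; have := qD f (g - f); rewrite addrC subrK.
rewrite eA; apply: (le_trans (qD _ _)).
apply: (le_trans (lerD (Ht t) (H1 _))).
have h1 := ler_wpM2l C0 hg.
have h2 := mul_le_of_lt_div D0 ht.
have h3 : 0 <= q (f - g) := q_ge0 _.
nra.
Qed.

Lemma ext_lb (A : X -> X) c : lin A -> qbnd A -> 0 < c ->
  (forall t, c * q (lc x t) <= q (A (lc x t))) -> forall f, c * q f <= q (A f).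
Proof.
move=> lA [C1 C10 H1] c0 Ht f; apply: le_by_eps => e e0.
have D0 : 0 < C1 + c by lra.
have [t ht] := dens f (divr_gt0 e0 D0).
set g := lc x t.
have hf : q f <= q g + q (f - g).
  by rewrite -{1}(subrK g f) addrC; apply: qD.
have hAg : q (A g) <= q (A f) + q (A (g - f)).
  by rewrite linB // -{1}(subrK (A f) (A g)) addrC; apply: qD.
apply: (le_trans (ler_wpM2l (ltW c0) hf)); rewrite mulrDr.
apply: (le_trans (lerD (Ht t) (lexx _))).
apply: (le_trans (lerD hAg (lexx _))).
rewrite -addrA lerD2l.
apply: (le_trans (lerD (H1 _) (lexx _))); rewrite qB -mulrDl.
exact: mul_le_of_lt_div D0 ht.
Qed.


Lemma lin_id : @lin _ X id. Proof. by []. Qed.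
Lemma qbnd_id : qbnd (@id X). Proof. by exists 1 => // f; rewrite mul1r. Qed.
Lemma lin_comp (A B : X -> X) : lin A -> lin B -> lin (A \o B).
Proof. by move=> hA hB a f g /=; rewrite hB hA. Qed.
Lemma qbnd_comp (A B : X -> X) : qbnd A -> qbnd B -> qbnd (A \o B).
Proof.
move=> [C1 C10 H1] [C2 C20 H2]; exists (C1 * C2); first exact: mulr_gt0.
move=> f /=; apply: (le_trans (H1 _)); rewrite -mulrA ler_pM2l //.
Qed.

Variable L : (nat -> nat) -> X -> X.
Hypothesis L_lin : forall psi, Inc psi -> lin (L psi).
Hypothesis L_x : forall psi, Inc psi -> forall n, L psi (x n) = x (psi n).
Hypothesis L_ub : forall psi, Inc psi -> qbnd (L psi).
Hypothesis L_lb : forall psi, Inc psi -> exists2 c : R, 0 < c & forall f, c * q f <= q (L psi f).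

Lemma L_lc psi t : Inc psi -> L psi (lc x t) = lc (x \o psi) t.
Proof. by move=> H; rewrite (lin_lc _ _ (L_lin H)); apply: lc_local => u _ /=; exact: L_x. Qed.

Lemma L_comp rho tau f : Inc rho -> Inc tau -> L rho (L tau f) = L (rho \o tau) f.
Proof.
move=> Hr Ht.
have := @agree (L rho \o L tau) (L (rho \o tau)) (lin_comp (L_lin Hr) (L_lin Ht))
  (L_lin (Inc_comp Hr Ht)) (qbnd_comp (L_ub Hr) (L_ub Ht)) (L_ub (Inc_comp Hr Ht)).
apply => t /=.
rewrite (L_lc _ Ht) (L_lc _ (Inc_comp Hr Ht)) lc_map (L_lc _ Hr) -lc_map.
by [].
Qed.

Lemma L_id f : L id f = f.
Proof.
have := @agree (L id) id (L_lin Inc_id) lin_id (L_ub Inc_id) qbnd_id.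
apply => t; rewrite L_lc //; exact: Inc_id.
Qed.

Lemma L_inj psi f g : Inc psi -> L psi f = L psi g -> f = g.
Proof.
move=> H e; have [c c0 Hc] := L_lb H.
apply/eqP; rewrite -subr_eq0; apply/eqP/q_eq0.
have := Hc (f - g); rewrite (linB (L_lin H)) e subrr q0.
move=> h; apply/eqP; rewrite eq_le q_ge0 andbT.
by rewrite -(pmulr_rle0 _ c0).
Qed.

Definition csq (S : set nat) f := forall e : R, 0 < e ->
  exists t, (forall u, u \in t -> S u.1) /\ q (f - lc x t) < e.

Lemma L_csq rho (S : set nat) h : Inc rho -> (forall m, S (rho m)) -> csq S (L rho h).
Proof.
move=> Hr HS e e0; have [C C0 HC] := L_ub Hr.
have [t ht] := dens h (divr_gt0 e0 C0).
exists (mapi rho t); split.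
  by move=> u /mapP [v _ ->] /=.
rewrite -lc_map -L_lc // -(linB (L_lin Hr)).
apply: (le_lt_trans (HC _)).
by rewrite mulrC -ltr_pdivlMr.
Qed.

Lemma csq_range sigma (S : set nat) f : Inc sigma ->
  (forall n, S n -> exists m, sigma m = n) -> csq S f -> exists h, L sigma h = f.
Proof.
move=> Hs HS Hf.
have : forall n, exists m, S n -> sigma m = n.
  move=> n; case: (pselect (S n)) => [/HS [m hm]|nS]; first by exists m.
  by exists 0%N.
move=> /choice [sinv Hsinv].
have : forall j : nat, exists t, (forall u, u \in t -> S u.1) /\
    q (f - lc x t) < j.+1%:R^-1.
  by move=> j; apply: Hf; rewrite invr_gt0 ltr0n.
move=> /choice [tt Htt].
pose hs j := lc x (mapi sinv (tt j)).
have Lh j : L sigma (hs j) = lc x (tt j).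
  rewrite /hs L_lc // -lc_map; apply: lc_local => u hu /=.
  by rewrite Hsinv //; apply: (proj1 (Htt j)).
have [c c0 Hc] := L_lb Hs.
have [C C0 HC] := L_ub Hs.
have Hcau : forall e : R, 0 < e -> exists n0, forall m n, (n0 <= m)%N -> (n0 <= n)%N ->
    q (hs m - hs n) < e.
  move=> e e0.
  have ce0 : 0 < c * e / 2 by rewrite divr_gt0 // mulr_gt0.
  have [n0 Hn0] := small_inv ce0.
  exists n0 => m n hm hn.
  have h1 := Hc (hs m - hs n).
  rewrite (linB (L_lin Hs)) !Lh in h1.
  have h2 := q_tri (lc x (tt m)) f (lc x (tt n)).
  have h3 := proj2 (Htt m); have h4 := proj2 (Htt n).
  rewrite qB in h3.
  have h5 := Hn0 _ hm; have h6 := Hn0 _ hn.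
  have : c * q (hs m - hs n) < c * e / 2 + c * e / 2.
    exact: le_lt_trans h1 (le_lt_trans h2 (ltrD (lt_trans h3 h5) (lt_trans h4 h6))).
  rewrite -splitr.
  by rewrite ltr_pM2l.
have [l Hl] := compl Hcau.
exists l.
apply/eqP; rewrite -subr_eq0; apply/eqP/q_eq0.
apply: ge0_le0_eq0 => // e e0.
have e2 : 0 < e / 2 / C by rewrite !divr_gt0.
have [n1 Hn1] := Hl _ e2.
have e3 : 0 < e / 2 by rewrite divr_gt0.
have [n2 Hn2] := small_inv e3.
pose n := maxn n1 n2.
have h1 := q_tri (L sigma l) (L sigma (hs n)) f.
rewrite -(linB (L_lin Hs)) Lh in h1.
have h2 := HC (l - hs n); rewrite qB in h2.
have h3 := Hn1 n (leq_maxl _ _).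
have h4 := proj2 (Htt n); have h5 := Hn2 n (leq_maxr _ _).
have h6 : C * q (hs n - l) <= e / 2.
  by rewrite mulrC -ler_pdivlMr // ltW.
rewrite [e]splitr; apply: (le_trans h1); apply: lerD.
  exact: le_trans h2 h6.
by rewrite qB; exact: ltW (lt_trans h4 h5).
Qed.


Lemma lc_q_L psi t : Inc psi -> q (lc (x \o psi) t) = q (L psi (lc x t)).
Proof. by move=> H; rewrite L_lc. Qed.

Lemma key_identity r u psi t : Inc u -> Inc psi ->
  L (fun n => (n + u r)%N) (L psi (lc x t)) =
  lc (x \o splice r u psi) (mapi (fun n => (n + r)%N) t)
  /\ lc x (mapi (fun n => (n + r)%N) t) = L (fun n => (n + r)%N) (lc x t).
Proof.
move=> Iu Ip; split; last by rewrite (L_lc _ (Inc_addr r)) (lc_map x).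
rewrite (L_lc _ Ip) (lc_map x psi t) (L_lc _ (Inc_addr _)).
rewrite -(lc_map (x \o (fun n => (n + u r)%N)) psi t).
rewrite -(lc_map (x \o splice r u psi) (fun n => (n + r)%N) t).
by apply: lc_local => v _ /=; rewrite splice_shift.
Qed.


Lemma L_unif_ub : exists2 C : R, 0 < C &
  forall psi, Inc psi -> forall f, q (L psi f) <= C * q f.
Proof.
pose B psi t (j : nat) := j%:R * q (lc x t) < q (lc (x \o psi) t).
have Bloc : forall psi psi' t j, (forall n, n \in map fst t -> psi n = psi' n) ->
    B psi t j -> B psi' t j.
  move=> psi psi' t j H; rewrite /B (@lc_local _ _ (x \o psi) (x \o psi')) //.
  by move=> v hv /=; rewrite H // map_f.
have Bgood : forall psi, Inc psi -> exists j0, forall t, ~ B psi t j0.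
  move=> psi Ip; have [C C0 HC] := L_ub Ip.
  exists (Num.bound C) => t; rewrite /B (lc_q_L _ Ip) => h.
  have h1 := HC (lc x t).
  have h2 := archi_boundP (ltW C0).
  have h3 : C * q (lc x t) <= (Num.bound C)%:R * q (lc x t).
    by apply: ler_wpM2r => //; exact: ltW.
  have := lt_le_trans h (le_trans h1 h3); by rewrite ltxx.
have [r [u [j [Iu Hu]]]] := diag [::] Bloc Bgood.
have Ish := Inc_addr r; have Icc := Inc_addr (u r).
have [Csh Csh0 HCsh] := L_ub Ish.
have [dc dc0 Hdc] := L_lb Icc.
exists (j%:R * Csh / dc + 1).
  by rewrite ltr_wpDl // divr_ge0 // ?mulr_ge0 // ltW.
move=> psi Ip; apply: ext_ub; [exact: L_lin|exact: L_ub|by rewrite addr_ge0 // divr_ge0 // ?mulr_ge0 // ltW|].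
move=> t.
have [e1 e2] := key_identity r t Iu Ip.
have Isp := splice_Inc r Iu Ip.
have hB := Hu _ Isp (fun n hn => splice_agree u psi hn) (mapi (fun n => (n + r)%N) t).
rewrite /B in hB; move/negP: hB; rewrite -leNgt e2 -e1 => hB.
have h1 := Hdc (L psi (lc x t)).
have h2 := HCsh (lc x t).
have hj : 0 <= j%:R :> R by [].
have h3 : j%:R * q (L (fun n => (n + r)%N) (lc x t)) <= j%:R * (Csh * q (lc x t)).
  exact: ler_wpM2l.
have h4 : dc * q (L psi (lc x t)) <= j%:R * Csh * q (lc x t).
  by rewrite -mulrA; apply: (le_trans h1); apply: (le_trans hB).
rewrite mulrDl mul1r.
apply: (@le_trans _ _ (j%:R * Csh / dc * q (lc x t))); last by rewrite lerDl q_ge0.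
by rewrite mulrAC ler_pdivlMr // mulrC.
Qed.

Lemma L_unif_lb : exists2 c : R, 0 < c &
  forall psi, Inc psi -> forall f, c * q f <= q (L psi f).
Proof.
pose B psi t (j : nat) := q (lc (x \o psi) t) * j.+1%:R < q (lc x t).
have Bloc : forall psi psi' t j, (forall n, n \in map fst t -> psi n = psi' n) ->
    B psi t j -> B psi' t j.
  move=> psi psi' t j H; rewrite /B (@lc_local _ _ (x \o psi) (x \o psi')) //.
  by move=> v hv /=; rewrite H // map_f.
have Bgood : forall psi, Inc psi -> exists j0, forall t, ~ B psi t j0.
  move=> psi Ip; have [c c0 Hc] := L_lb Ip.
  have [j0 Hj0] := small_inv c0.
  exists j0 => t; rewrite /B (lc_q_L _ Ip) => h.
  have h1 := Hc (lc x t).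
  have hj := Hj0 j0 (leqnn _).
  have jp : 0 < j0.+1%:R :> R by rewrite ltr0n.
  have h2 : q (L psi (lc x t)) < q (lc x t) / j0.+1%:R by rewrite ltr_pdivlMr.
  have Q0 : 0 < q (lc x t).
    by apply: le_lt_trans h; rewrite mulr_ge0 // ltW.
  have h3 : q (lc x t) / j0.+1%:R < c * q (lc x t).
    by rewrite mulrC ltr_pM2r.
  have := le_lt_trans h1 (lt_trans h2 h3); by rewrite ltxx.
have [r [u [j [Iu Hu]]]] := diag [::] Bloc Bgood.
have Ish := Inc_addr r; have Icc := Inc_addr (u r).
have [Ccc Ccc0 HCcc] := L_ub Icc.
have [dsh dsh0 Hdsh] := L_lb Ish.
have jp : 0 < j.+1%:R :> R by rewrite ltr0n.
exists (dsh / (j.+1%:R * Ccc)); first by rewrite divr_gt0 // mulr_gt0.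
move=> psi Ip; apply: ext_lb; [exact: L_lin|exact: L_ub| by rewrite divr_gt0 // mulr_gt0|].
move=> t.
have [e1 e2] := key_identity r t Iu Ip.
have Isp := splice_Inc r Iu Ip.
have hB := Hu _ Isp (fun n hn => splice_agree u psi hn) (mapi (fun n => (n + r)%N) t).
rewrite /B in hB; move/negP: hB; rewrite -leNgt e2 -e1 => hB.
have h1 := HCcc (L psi (lc x t)).
have h2 := Hdsh (lc x t).
have h3 : q (L (fun n => (n + u r)%N) (L psi (lc x t))) * j.+1%:R
    <= Ccc * q (L psi (lc x t)) * j.+1%:R by apply: ler_wpM2r => //; exact: ltW.
have h4 : dsh * q (lc x t) <= Ccc * q (L psi (lc x t)) * j.+1%:R.
  exact: le_trans h2 (le_trans hB h3).
rewrite mulrAC ler_pdivrMr ?mulr_gt0 //.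
apply: (le_trans h4); rewrite le_eqVlt; apply/orP; left; apply/eqP; ring.
Qed.

Variable wK : K -> R.
Hypothesis wK_ge0 : forall a, 0 <= wK a.
Hypothesis qZ : forall a f, q (a *: f) = wK a * q f.

Definition PhiS h := [set y : R | exists rho, Inc rho /\ y = q (L rho h)].
Definition Phi h := sup (PhiS h).
Definition PsiS h := [set y : R | exists tau, Inc tau /\ y = Phi (L tau h)].
Definition Psi h := inf (PsiS h).

Lemma PhiS_ne h : PhiS h !=set0.
Proof. by exists (q (L id h)), id; split => //; exact: Inc_id. Qed.

Lemma PhiS_ub h : has_ubound (PhiS h).
Proof.
have [C C0 HC] := L_unif_ub.
by exists (C * q h) => y [rho [Ir ->]]; apply: HC.
Qed.

Lemma Phi_ub h rho : Inc rho -> q (L rho h) <= Phi h.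
Proof. by move=> Ir; apply: (ub_le_sup (PhiS_ub h)); exists rho. Qed.

Lemma Phi_le h B : (forall rho, Inc rho -> q (L rho h) <= B) -> Phi h <= B.
Proof. by move=> H; apply: ge_sup; [exact: PhiS_ne|move=> y [rho [Ir ->]]; apply: H]. Qed.

Lemma Phi_ge h : q h <= Phi h.
Proof. by rewrite -{1}(L_id h); apply: Phi_ub; exact: Inc_id. Qed.

Lemma Phi_ge0 h : 0 <= Phi h.
Proof. exact: le_trans (q_ge0 h) (Phi_ge h). Qed.

Lemma Phi_bnd : exists2 C : R, 0 < C & forall h, Phi h <= C * q h.
Proof.
have [C C0 HC] := L_unif_ub.
by exists C => // h; apply: Phi_le => rho Ir; apply: HC.
Qed.

Lemma Phi_D f g : Phi (f + g) <= Phi f + Phi g.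
Proof.
apply: Phi_le => rho Ir; rewrite (linD (L_lin Ir)).
apply: (le_trans (qD _ _)); apply: lerD; exact: Phi_ub.
Qed.

Lemma Phi_L tau h : Inc tau -> Phi (L tau h) <= Phi h.
Proof.
move=> It; apply: Phi_le => rho Ir; rewrite L_comp //.
apply: Phi_ub; exact: Inc_comp.
Qed.

Lemma Phi_Z a h : Phi (a *: h) = wK a * Phi h.
Proof.
apply/eqP; rewrite eq_le; apply/andP; split.
  apply: Phi_le => rho Ir; rewrite (linZ (L_lin Ir)) qZ.
  by apply: ler_wpM2l => //; exact: Phi_ub.
have [w0|wp] := eqVneq (wK a) 0; first by rewrite w0 mul0r; exact: Phi_ge0.
have wpos : 0 < wK a by rewrite lt_def wp wK_ge0.
rewrite mulrC -ler_pdivlMr //; apply: Phi_le => rho Ir.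
rewrite ler_pdivlMr // mulrC -qZ -(linZ (L_lin Ir)); exact: Phi_ub.
Qed.

Lemma PsiS_ne h : PsiS h !=set0.
Proof. by exists (Phi (L id h)), id; split => //; exact: Inc_id. Qed.

Lemma PsiS_lb h : has_lbound (PsiS h).
Proof. by exists 0 => y [tau [_ ->]]; exact: Phi_ge0. Qed.

Lemma Psi_lb h tau : Inc tau -> Psi h <= Phi (L tau h).
Proof. by move=> It; apply: (ge_inf (PsiS_lb h)); exists tau. Qed.

Lemma Psi_ge h B : (forall tau, Inc tau -> B <= Phi (L tau h)) -> B <= Psi h.
Proof. by move=> H; apply: lb_le_inf; [exact: PsiS_ne|move=> y [tau [It ->]]; apply: H]. Qed.

Lemma Psi_le h : Psi h <= Phi h.
Proof. by rewrite -{2}(L_id h); apply: Psi_lb; exact: Inc_id. Qed.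

Lemma Psi_lower : exists2 c : R, 0 < c & forall h, c * q h <= Psi h.
Proof.
have [c c0 Hc] := L_unif_lb.
exists c => // h; apply: Psi_ge => tau It.
exact: le_trans (Hc _ It h) (Phi_ge _).
Qed.

Lemma Psi_upper : exists2 C : R, 0 < C & forall h, Psi h <= C * q h.
Proof.
have [C C0 HC] := Phi_bnd.
by exists C => // h; apply: le_trans (Psi_le h) (HC h).
Qed.

Lemma Psi_ge0 h : 0 <= Psi h.
Proof. by apply: Psi_ge => tau _; exact: Phi_ge0. Qed.

Lemma Psi_D f g : Psi (f + g) <= Psi f + Psi g.
Proof.
have H : forall t1 t2, Inc t1 -> Inc t2 -> Psi (f + g) <= Phi (L t1 f) + Phi (L t2 g).
  move=> t1 t2 I1 I2.
  have [a [b [Ia Ib Hab]]] := refine I1 I2.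
  have e : a \o t1 = b \o t2 by apply: funext => n /=; exact: Hab.
  have I3 := Inc_comp Ia I1.
  apply: (le_trans (Psi_lb _ I3)).
  rewrite (linD (L_lin I3)); apply: (le_trans (Phi_D _ _)).
  apply: lerD.
    by rewrite -L_comp //; exact: Phi_L.
  by rewrite e -L_comp //; exact: Phi_L.
have H2 : forall t2, Inc t2 -> Psi (f + g) - Phi (L t2 g) <= Psi f.
  move=> t2 I2; apply: Psi_ge => t1 I1.
  by rewrite lerBlDr; exact: H.
rewrite -lerBlDl; apply: Psi_ge => t2 I2.
by rewrite lerBlDl -lerBlDr; exact: H2.
Qed.

Lemma Psi_Z a h : Psi (a *: h) = wK a * Psi h.
Proof.
have E : forall tau, Inc tau -> Phi (L tau (a *: h)) = wK a * Phi (L tau h).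
  by move=> tau It; rewrite (linZ (L_lin It)) Phi_Z.
apply/eqP; rewrite eq_le; apply/andP; split; last first.
  apply: Psi_ge => tau It; rewrite E //.
  by apply: ler_wpM2l => //; exact: Psi_lb.
have [w0|wp] := eqVneq (wK a) 0.
  rewrite w0 mul0r; apply: (le_trans (Psi_lb _ Inc_id)).
  by rewrite (E _ Inc_id) w0 mul0r.
have wpos : 0 < wK a by rewrite lt_def wp wK_ge0.
rewrite mulrC -ler_pdivrMr //; apply: Psi_ge => tau It.
rewrite ler_pdivrMr // mulrC -E //; exact: Psi_lb.
Qed.

Lemma Psi_L sigma h : Inc sigma -> Psi (L sigma h) = Psi h.
Proof.
move=> Is; apply/eqP; rewrite eq_le; apply/andP; split; last first.
  apply: Psi_ge => tau It; rewrite L_comp //; apply: Psi_lb; exact: Inc_comp.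
apply: Psi_ge => tau It.
have [a [b [Ia Ib Hab]]] := refine Is It.
have e : a \o sigma = b \o tau by apply: funext => n /=; exact: Hab.
apply: (le_trans (Psi_lb _ Ia)).
rewrite L_comp // e -L_comp //; exact: Phi_L.
Qed.

Lemma Psi_eq0 h : Psi h = 0 -> h = 0.
Proof.
move=> H; have [c c0 Hc] := Psi_lower; apply: q_eq0.
apply/eqP; rewrite eq_le q_ge0 andbT.
by rewrite -(pmulr_rle0 _ c0) -H.
Qed.

Lemma translation (M : set nat) (psi : nat -> nat) : infinite_set M ->
  (forall m n, M m -> M n -> (m < n)%N -> (psi m < psi n)%N) ->
  exists T : X -> X, [/\ (forall a f g, csq M f -> csq M g -> T (a *: f + g) = a *: T f + T g),
   (forall t, (forall u, u \in t -> M u.1) -> T (lc x t) = lc (x \o psi) t),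
   (forall f, csq M f -> csq (psi @` M) (T f)) /\
   (forall g, csq (psi @` M) g -> exists2 f, csq M f & T f = g)
   & forall f, csq M f -> Psi (T f) = Psi f].
Proof.
move=> Minf Hpsi.
have [sg [Is Ms onto]] := enum_inf Minf.
have Ir : Inc (psi \o sg) by move=> m n hmn /=; apply: Hpsi => //; exact: Is.
have : forall f, exists h, (exists h', L sg h' = f) -> L sg h = f.
  move=> f; case: (pselect (exists h', L sg h' = f)) => [[h' e]|nh].
    by exists h'.
  by exists 0.
move=> /choice [Li HLi].
have : forall n, exists m, M n -> sg m = n.
  move=> n; case: (pselect (M n)) => [/onto [m e]|nM]; first by exists m.
  by exists 0%N.
move=> /choice [sinv Hsinv].
have key f : csq M f -> L sg (Li f) = f.
  move=> hf; apply: HLi; exact: csq_range Is onto hf.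
have LiL h : Li (L sg h) = h.
  apply: (L_inj Is); apply: HLi; by exists h.
exists (fun f => L (psi \o sg) (Li f)); split.
- move=> a f g hf hg.
  have e : Li (a *: f + g) = a *: Li f + Li g.
    apply: (L_inj Is); rewrite (L_lin Is) (key f hf) (key g hg).
    apply: HLi; exists (a *: Li f + Li g); by rewrite (L_lin Is) (key f hf) (key g hg).
  by rewrite e (L_lin Ir).
- move=> t ht.
  have e1 : L sg (lc x (mapi sinv t)) = lc x t.
    rewrite (L_lc _ Is) -lc_map; apply: lc_local => u hu /=.
    by rewrite Hsinv //; exact: ht.
  have e2 : Li (lc x t) = lc x (mapi sinv t) by rewrite -e1 LiL.
  rewrite e2 (L_lc _ Ir) -lc_map; apply: lc_local => u hu /=.
  by rewrite Hsinv //; exact: ht.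
- split.
    move=> f _; apply: L_csq => // m /=; by exists (sg m).
  move=> g hg.
  have [h eh] : exists h, L (psi \o sg) h = g.
    apply: csq_range Ir _ hg => n [m Mm <-].
    by have [k ek] := onto m Mm; exists k => /=; rewrite ek.
  exists (L sg h); first by apply: L_csq.
  by rewrite LiL.
- move=> f hf; rewrite Psi_L // -(Psi_L _ Is) key //.
Qed.

Lemma QCore_result : exists Ps : X -> R,
  [/\ (forall h, 0 <= Ps h) /\ (forall h, Ps h = 0 -> h = 0),
      (forall f g, Ps (f + g) <= Ps f + Ps g),
      (forall a h, Ps (a *: h) = wK a * Ps h),
      (exists2 c : R, 0 < c & forall h, c * q h <= Ps h) /\
      (exists2 C : R, 0 < C & forall h, Ps h <= C * q h) &
   forall (M : set nat) (psi : nat -> nat), infinite_set M ->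
  (forall m n, M m -> M n -> (m < n)%N -> (psi m < psi n)%N) ->
  exists T : X -> X, [/\ (forall a f g, csq M f -> csq M g -> T (a *: f + g) = a *: T f + T g),
   (forall t, (forall u, u \in t -> M u.1) -> T (lc x t) = lc (x \o psi) t),
   (forall f, csq M f -> csq (psi @` M) (T f)) /\
   (forall g, csq (psi @` M) g -> exists2 f, csq M f & T f = g)
   & forall f, csq M f -> Ps (T f) = Ps f]].
Proof.
exists Psi; split.
- split; [exact: Psi_ge0 | exact: Psi_eq0].
- exact: Psi_D.
- exact: Psi_Z.
- split; [exact: Psi_lower | exact: Psi_upper].
- move=> M psi; exact: translation.
Qed.
End QCore.

Section Outer.
Variables (R : realType) (K : numFieldType) (X : lmodType K).

Definition dom (F G : X -> R) := forall e : R, 0 < e ->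
  exists2 d : R, 0 < d & forall h, G h < d -> F h < e.

Lemma dom_trans F G H : dom F G -> dom G H -> dom F H.
Proof.
move=> d1 d2 e e0; have [d d0 hd] := d1 e e0; have [d' d'0 hd'] := d2 d d0.
by exists d' => // h /hd' /hd.
Qed.

Lemma dom_mul F G k : 0 < k -> (forall h, F h <= k * G h) -> dom F G.
Proof.
move=> k0 H e e0; exists (e / k); first exact: divr_gt0.
move=> h hh; apply: le_lt_trans (H h) _.
by rewrite mulrC -ltr_pdivlMr.
Qed.

Lemma dom_extl F F' G : (forall h, F h = F' h) -> dom F G -> dom F' G.
Proof. by move=> E d e e0; have [d0 d00 hd] := d e e0; exists d0 => // h; rewrite -E; apply: hd. Qed.

Lemma powK (y r : R) : 0 <= y -> 0 < r -> (y `^ r^-1) `^ r = y.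
Proof. by move=> y0 r0; rewrite -powRrM mulVf ?gt_eqF // powRr1. Qed.

Lemma powK' (y r : R) : 0 <= y -> 0 < r -> (y `^ r) `^ r^-1 = y.
Proof. by move=> y0 r0; rewrite -powRrM mulfV ?gt_eqF // powRr1. Qed.

Lemma powR_lt (a b r : R) : 0 < r -> 0 <= a -> 0 <= b -> a < b -> a `^ r < b `^ r.
Proof. by move=> r0 a0 b0 ab; apply: gt0_ltr_powR; rewrite ?nnegrE. Qed.

Lemma powR_le (a b r : R) : 0 <= r -> 0 <= a -> 0 <= b -> a <= b -> a `^ r <= b `^ r.
Proof. by move=> r0 a0 b0 ab; apply: ge0_ler_powR; rewrite ?nnegrE. Qed.

Lemma dom_pow1 G r : 0 < r -> (forall h, 0 <= G h) -> dom (fun h => G h `^ r) G.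
Proof.
move=> r0 G0 e e0; exists (e `^ r^-1); first exact: powR_gt0.
move=> h hh; rewrite -(powK (ltW e0) r0); apply: powR_lt => //.
exact: powR_ge0.
Qed.

Lemma dom_pow2 G r : 0 < r -> (forall h, 0 <= G h) -> dom G (fun h => G h `^ r).
Proof.
move=> r0 G0 e e0; exists (e `^ r); first exact: powR_gt0.
move=> h; apply: contraTT; rewrite -!leNgt => hh.
by apply: powR_le => //; [exact: ltW | exact: ltW].
Qed.

Lemma ics_dom F G (x : nat -> X) S f : dom F G ->
  in_closed_span G x S f -> in_closed_span F x S f.
Proof.
move=> d H e e0; have [d0 d00 hd] := d e e0.
by have [g [hg hg']] := H d0 d00; exists g; split => //; apply: hd.
Qed.

Lemma ics_csq (q : X -> R) x S f : in_closed_span q x S f <-> csq q x S f.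
Proof.
split=> H e e0; have [g [hg hg']] := H e e0.
  case: hg => s [a [hs eg]]; exists (map (fun n => (n, a n)) s); split.
    by move=> u /mapP [n ns ->] /=; apply: hs.
  by rewrite -lin_comb_lc -eg.
exists (lc x g); split => //.
have [s [a [_ hs e1]]] := lc_span x g.
exists s, a; split => //.
by move=> n /hs /mapP [u ug ->]; apply: hg.
Qed.

End Outer.

Lemma main_gen (R : realType) (K : numFieldType) (absK : K -> R) (X : lmodType K)
  (abs_ge0 : forall a, 0 <= absK a) (absN1 : absK (-1) = 1) (abs0 : absK 0 = 0)
  (p : R) (N : X -> R) (x : nat -> X) :
  0 < p -> quasi_banach absK N -> locally_pconvex absK p N -> spreading_basis absK N x ->
  exists N' : X -> R, [/\ pnorm absK p N', equiv_qn N N' & isometrically_spreading N' x].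
Proof.
move=> p0 [[N_ge0 N_eq0 N_Z _] Ncompl].
move=> [P [[[P_ge0 P_eq0 P_Z _] P_tri] [c1 [C1 [c10 C10 HcC]]]]].
move=> [xs [[cms_dense _ cms_bio] Hspr]].
pose q f := P f `^ p.
have q_ge0 f : 0 <= q f by exact: powR_ge0.
have q_eq0 f : q f = 0 -> f = 0 by move/powR_eq0_eq0; exact: P_eq0.
have P0 : P 0 = 0 by have := P_Z 0 0; rewrite scale0r abs0 mul0r.
have q0 : q 0 = 0 by rewrite /q P0 powR0 // gt_eqF.
have qN f : q (- f) = q f by rewrite /q -scaleN1r P_Z absN1 mul1r.
have qD f g : q (f + g) <= q f + q g by exact: P_tri.
pose wK a := absK a `^ p.
have wK_ge0 a : 0 <= wK a by exact: powR_ge0.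
have qZ a f : q (a *: f) = wK a * q f by rewrite /q P_Z powRM.
have PleN f : P f <= C1 * N f by have /andP[] := HcC f.
have NleP f : N f <= c1^-1 * P f.
  by rewrite ler_pdivlMl //; have /andP[] := HcC f.
have domqN : dom q N.
  apply: (dom_trans (dom_pow1 p0 P_ge0)); exact: dom_mul C10 PleN.
have domNq : dom N q.
  have ci0 : 0 < c1^-1 by rewrite invr_gt0.
  apply: (dom_trans (dom_mul ci0 NleP)); exact: dom_pow2.
have dens f (e : R) : 0 < e -> exists t, q (f - lc x t) < e.
  move=> e0; have := ics_dom domqN (cms_dense f).
  by move/ics_csq => /(_ e e0) [t [_ ht]]; exists t.
have compl : forall u : nat -> X,
  (forall e : R, 0 < e -> exists n0, forall m n, (n0 <= m)%N -> (n0 <= n)%N -> q (u m - u n) < e) ->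
  exists l, forall e : R, 0 < e -> exists n0, forall n, (n0 <= n)%N -> q (u n - l) < e.
  move=> u Hu.
  have [l Hl] : exists l, forall e : R, 0 < e -> exists n0, forall n, (n0 <= n)%N -> N (u n - l) < e.
    apply: Ncompl => e e0; have [d d0 hd] := domNq e e0.
    by have [n0 hn0] := Hu d d0; exists n0 => m n hm hn; apply: hd; apply: hn0.
  exists l => e e0; have [d d0 hd] := domqN e e0.
  by have [n0 hn0] := Hl d d0; exists n0 => n hn; apply: hd; apply: hn0.
have : forall psi, exists L : X -> X, Inc psi -> is_shift_op N x xs psi L /\
    exists2 c : R, 0 < c & forall f, c * N f <= N (L f).
  move=> psi; case: (pselect (Inc psi)) => [Ip|nIp]; last by exists id.
  by have [L HL] := Hspr psi Ip; exists L.
move=> /choice [L HL].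
have L_lin psi : Inc psi -> lin (L psi).
  by move=> Ip; have [[[hl _] _] _] := HL psi Ip.
have L_x psi : Inc psi -> forall n, L psi (x n) = x (psi n).
  move=> Ip n; have [[_ Hs] _] := HL psi Ip.
  have := Hs [:: n] (fun _ => 1) isT.
  by rewrite /lin_comb !big_seq1 scale1r cms_bio eqxx scale1r.
have L_ub psi : Inc psi -> qbnd q (L psi).
  move=> Ip; have [[[_ [CL HCL]] _] _] := HL psi Ip.
  pose k := C1 * (`|CL| + 1) / c1.
  have k0 : 0 < k by rewrite /k divr_gt0 // mulr_gt0 // ltr_pwDr // normr_ge0.
  exists (k `^ p); first exact: powR_gt0.
  move=> f; rewrite /q -powRM ?(ltW k0) //; apply: powR_le => //.
  - exact: ltW.
  - by rewrite mulr_ge0 // ltW.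
  have h1 := PleN (L psi f); have h2 := HCL f; have h3 := NleP f.
  have h4 : CL * N f <= (`|CL| + 1) * N f.
    by apply: ler_wpM2r => //; apply: (le_trans (ler_norm CL)); rewrite lerDl.
  have h5 : (`|CL| + 1) * N f <= (`|CL| + 1) * (c1^-1 * P f).
    by apply: ler_wpM2l => //; rewrite addr_ge0.
  apply: (le_trans h1); rewrite /k.
  have -> : C1 * (`|CL| + 1) / c1 * P f = C1 * ((`|CL| + 1) * (c1^-1 * P f)) by ring.
  by rewrite ler_pM2l //; apply: (le_trans h2); apply: (le_trans h4).
have L_lb psi : Inc psi -> exists2 c : R, 0 < c & forall f, c * q f <= q (L psi f).
  move=> Ip; have [_ [cL cL0 HcL]] := HL psi Ip.
  pose k := c1 * cL / C1.
  have k0 : 0 < k by rewrite /k divr_gt0 // mulr_gt0.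
  exists (k `^ p); first exact: powR_gt0.
  move=> f; rewrite /q -powRM ?(ltW k0) //; apply: powR_le => //.
  - exact: ltW.
  - by rewrite mulr_ge0 // ltW.
  have h1 : c1 * N (L psi f) <= P (L psi f) by have /andP[] := HcC (L psi f).
  have h2 := HcL f.
  have h3 : P f <= C1 * N f := PleN f.
  have h4 : c1 * (cL * N f) <= c1 * N (L psi f) by rewrite ler_pM2l.
  apply: le_trans h1; apply: le_trans h4.
  have -> : k * P f = c1 * (cL * (C1^-1 * P f)) by rewrite /k; ring.
  rewrite ler_pM2l // ler_pM2l // ler_pdivrMl //.
have [Ps [[Ps_ge0 Ps_eq0] Ps_D Ps_Z [[cP cP0 HcP] [CP CP0 HCP]] Ptrans]] :=
  QCore_result q_ge0 q_eq0 q0 qN qD dens compl L_lin L_x L_ub L_lb wK_ge0 qZ.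
pose N' f := Ps f `^ p^-1.
have ip0 : 0 < p^-1 by rewrite invr_gt0.
have N'_ge0 f : 0 <= N' f by exact: powR_ge0.
have N'p f : N' f `^ p = Ps f by rewrite powK.
have qp f : q f `^ p^-1 = P f by rewrite powK'.
have domN'q : dom N' q.
  apply: (dom_trans (dom_pow1 ip0 Ps_ge0)); exact: dom_mul CP0 HCP.
have domqN' : dom q N'.
  have h : forall h, q h <= cP^-1 * Ps h by move=> h; rewrite ler_pdivlMl // HcP.
  have ci0 : 0 < cP^-1 by rewrite invr_gt0.
  apply: (dom_trans (dom_mul ci0 h)).
  apply: (dom_extl N'p); exact: dom_pow1.
have icsE S f : in_closed_span N' x S f <-> csq q x S f.
  split.
    by move=> H; apply/ics_csq; apply: ics_dom domqN' H.
  by move=> /ics_csq H; apply: ics_dom domN'q H.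
exists N'; split.
- split; last by move=> f g; rewrite !N'p.
  split.
  + exact: N'_ge0.
  + by move=> f /powR_eq0_eq0; apply: Ps_eq0.
  + by move=> a f; rewrite /N' Ps_Z powRM // powK'.
  exists (2 `^ p^-1).
    apply: (@le_trans _ _ (1 `^ p^-1)); first by rewrite powR1.
    by apply: powR_le => //; [exact: ltW | lra].
  move=> f g; rewrite /N'.
  have h1 : Ps (f + g) `^ p^-1 <= (Ps f + Ps g) `^ p^-1.
    by apply: powR_le => //; [exact: ltW | rewrite addr_ge0].
  apply: (le_trans h1).
  have [hfg|hfg] := leP (Ps f) (Ps g).
    have h2 : (Ps f + Ps g) `^ p^-1 <= (2 * Ps g) `^ p^-1.
      apply: powR_le => //; [exact: ltW | rewrite addr_ge0 // | rewrite mulr_ge0 //| lra].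
    apply: (le_trans h2); rewrite powRM //; apply: ler_wpM2l; first exact: powR_ge0.
    by rewrite lerDr powR_ge0.
  have h2 : (Ps f + Ps g) `^ p^-1 <= (2 * Ps f) `^ p^-1.
    apply: powR_le => //; [exact: ltW | rewrite addr_ge0 // | rewrite mulr_ge0 //| lra].
  apply: (le_trans h2); rewrite powRM //; apply: ler_wpM2l; first exact: powR_ge0.
  by rewrite lerDl powR_ge0.
- exists (cP `^ p^-1 * c1), (CP `^ p^-1 * C1); split.
  + by rewrite mulr_gt0 // powR_gt0.
  + by rewrite mulr_gt0 // powR_gt0.
  move=> f; apply/andP; split.
    have h1 : (cP * q f) `^ p^-1 <= N' f by apply: powR_le => //; [exact: ltW | rewrite mulr_ge0 // ltW].
    rewrite powRM ?(ltW cP0) // qp in h1.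
    apply: le_trans h1; rewrite -mulrA ler_pM2l ?powR_gt0 //.
    by have /andP[] := HcC f.
  have h1 : N' f <= (CP * q f) `^ p^-1 by apply: powR_le => //; [exact: ltW | rewrite mulr_ge0 // ltW].
  rewrite powRM ?(ltW CP0) // qp in h1.
  apply: (le_trans h1); rewrite -mulrA ler_pM2l ?powR_gt0 //.
- move=> M psi Minf Hpsi.
  have [T [Tlin Tlc [Tcs Tsurj] TPs]] := Ptrans M psi Minf Hpsi.
  exists T; split.
  + by move=> a f g /icsE hf /icsE hg; apply: Tlin.
  + move=> s a hs; rewrite !lin_comb_lc; apply: Tlc.
    by move=> u /mapP [n ns ->] /=; apply: hs.
  + split.
      by move=> f /icsE hf; apply/icsE; apply: Tcs.
    by move=> g /icsE /Tsurj [f hf <-]; exists f => //; apply/icsE.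
  + by exists 1 => // f /icsE hf; rewrite mul1r /N' TPs.
  + by move=> f /icsE hf; rewrite /N' TPs.
Qed.

Local Close Scope classical_set_scope.
Unset Implicit Arguments.

Theorem theorem2p8 (R : realType) :
  (forall (X : lmodType R) (p : R) (N : X -> R) (x : nat -> X),
      0 < p <= 1 ->
      quasi_banach (fun a : R => `|a|) N ->
      locally_pconvex (fun a : R => `|a|) p N ->
      spreading_basis (fun a : R => `|a|) N x ->
      exists N' : X -> R, [/\ pnorm (fun a : R => `|a|) p N', equiv_qn N N'
                            & isometrically_spreading N' x])
  /\
  (forall (X : lmodType R[i]) (p : R) (N : X -> R) (x : nat -> X),
      0 < p <= 1 ->
      quasi_banach (fun a : R[i] => complex.Re `|a|) N ->
      locally_pconvex (fun a : R[i] => complex.Re `|a|) p N ->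
      spreading_basis (fun a : R[i] => complex.Re `|a|) N x ->
      exists N' : X -> R,
        [/\ pnorm (fun a : R[i] => complex.Re `|a|) p N', equiv_qn N N'
          & isometrically_spreading N' x]).
Proof.
split.
- move=> X p N x /andP[p0 _].
  have h1 : forall a : R, 0 <= `|a| by move=> a; exact: normr_ge0.
  have h2 : `|-1 : R| = 1 by rewrite normrN normr1.
  have h3 : `|0 : R| = 0 by rewrite normr0.
  exact: (main_gen h1 h2 h3 p0).
- move=> X p N x /andP[p0 _].
  have h1 : forall a : R[i], 0 <= complex.Re `|a| by move=> a; rewrite normc_def /= sqrtr_ge0.
  have h2 : complex.Re `|-1 : R[i]| = 1 by rewrite normrN normr1.
  have h3 : complex.Re `|0 : R[i]| = 0 by rewrite normr0.
  exact: (main_gen h1 h2 h3 p0).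
Qed.
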